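(* Let $n\ge 1$, let $c\in\mathbb{R}^n$ with $c_1\ge c_2\ge\cdots\ge c_n\ge 0$, and let $u\in\mathbb{R}^n$ with $u_i>0$ for all $i$. Let $f(x)=\frac12\left(\sum_{i=1}^n x_i\right)^2-\sum_{i=1}^n c_ix_i$. For $k=0,\dots,n$ let $U_k=\sum_{i=1}^k u_i$ ($U_0=0$) and let $x^{(k)}$ be the vector with $x^{(k)}_i=u_i$ for $i\le k$ and $x^{(k)}_i=0$ for $i>k$. For $k=1,\dots,n$ let $G_k=U_{k-1}+\frac12 u_k-c_k$, and suppose $\bar n$ is the smallest index in $\{1,\dots,n\}$ with $G_{\bar n}\ge 0$. Let $e_i$ denote the $i$-th standard unit vector of $\mathbb{R}^n$. (i) If $\bar n>1$, let $\delta_1=\min\{c_{\bar n-1}-U_{\bar n-2},\,u_{\bar n-1}\}$, $\delta_2=\max\{c_{\bar n}-U_{\bar n-1},\,0\}$, $\bar x=x^{(\bar n-2)}+\delta_1e_{\bar n-1}$ and $\tilde x=x^{(\bar n-1)}+\delta_2e_{\bar n}$. Then $\min\{f(\bar x),f(\tilde x)\}$ is the optimal value of the problem of minimizing $f(x)$ subject to $x^{(\bar n-2)}\le x\le x^{(\bar n)}$ (componentwise). (ii) If $\bar n=1$, let $\delta=\min\{c_1,u_1\}$ and $\tilde x=\delta e_1$. Then $f(\tilde x)$ is the optimal value of the problem of minimizing $f(x)$ subject to $x^{(0)}\le x\le x^{(1)}$.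
   Context: Inequalities between vectors are componentwise. *)

(* Defs.v *)
(* Vectors in R^n are functions 'I_n -> R; index i (1-based)
   in the paper corresponds to the ordinal of value i-1. *)
From mathcomp Require Import all_boot all_order all_algebra.
Set Implicit Arguments. Unset Strict Implicit.
Import Order.TTheory GRing.Theory Num.Theory.
Local Open Scope ring_scope.

Section Defs.
Variables (R : realFieldType) (n : nat).

Definition fobj (c x : 'I_n -> R) : R :=
  (\sum_(i < n) x i) ^+ 2 / 2%:R - \sum_(i < n) c i * x i.

Definition Usum (u : 'I_n -> R) (k : nat) : R := \sum_(i < n | (i < k)%N) u i.

Definition xk (u : 'I_n -> R) (k : nat) : 'I_n -> R :=
  fun i => if (i < k)%N then u i else 0.

Definition evec (j : 'I_n) : 'I_n -> R := fun i => if i == j then 1 else 0.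

(* G_{j+1} = U_j + u_{j+1}/2 - c_{j+1}, for the ordinal j (0-based) *)
Definition Gval (c u : 'I_n -> R) (j : 'I_n) : R :=
  Usum u j + u j / 2%:R - c j.

Definition vle (x y : 'I_n -> R) : Prop := forall i, x i <= y i.

Definition optimal_value (f : ('I_n -> R) -> R) (S : ('I_n -> R) -> Prop) (v : R) :=
  (forall x, S x -> v <= f x) /\
  (forall e, 0 < e -> exists x, S x /\ f x < v + e).

(* the predecessor ordinal of j (equal to j if j = 0) *)
Definition prevo (j : 'I_n) : 'I_n :=
  Ordinal (leq_ltn_trans (leq_pred j) (ltn_ord j)).

End Defs.
Arguments evec R [n] j _.

(* Main.v *)
Require Import Defs.
From mathcomp Require Import all_boot all_order all_algebra.
From mathcomp Require Import lra zify.
Import Order.TTheory GRing.Theory Num.Theory.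
Local Open Scope ring_scope.

Lemma alg1 (R : realFieldType) (K S T cp cn up un a b d1 d2 : R) :
  0 <= a -> a <= up -> 0 <= b -> b <= un -> cn <= cp ->
  S + up / 2%:R - cp < 0 -> 0 <= T + un / 2%:R - cn -> T = S + up ->
  d1 = Num.min (cp - S) up -> d2 = Num.max (cn - T) 0 ->
  Num.min ((S + d1 + 0)^+2/2%:R - (K + (cp * d1 + cn * 0)))
          ((S + up + d2)^+2/2%:R - (K + (cp * up + cn * d2)))
  <= (S + a + b)^+2/2%:R - (K + (cp * a + cn * b)).
Proof.
move=> a0 au b0 bu hc G1 G2 -> -> ->.
have hb: 0 <= (cp - cn) * b by apply: mulr_ge0; lra.
have ha: 0 <= (cp - cn) * (up - a) by apply: mulr_ge0; lra.
have sq := sqr_ge0 (S+a+b-cp).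
have sq2 := sqr_ge0 (S+a+b-cn).
rewrite ge_min; apply/orP.
case: (leP (cp - S) up) => h1; case: (leP (cn - (S + up)) 0) => h2.
- left; nra.
- left; nra.
- right. case: (leP (a+b) up) => ht.
  + have : 0 <= (up - (a+b)) * (cp - S - (a+b+up)/2) by apply: mulr_ge0; lra.
    nra.
  + have : 0 <= ((a+b) - up) * ((2*S+a+b+up)/2 - cn) by apply: mulr_ge0; lra.
    nra.
- right. nra.
Qed.

Lemma alg2 (R : realFieldType) (K cp up a d : R) :
  0 <= a -> a <= up -> 0 <= 0 + up / 2%:R - cp -> d = Num.min cp up ->
  (0 + d + 0)^+2/2%:R - (K + (cp * d + cp * 0))
  <= (0 + a + 0)^+2/2%:R - (K + (cp * a + cp * 0)).
Proof.
move=> a0 au G ->.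
have sq := sqr_ge0 (a - cp).
case: (leP cp up) => h; nra.
Qed.

Section Aux.
Local Set Implicit Arguments.
Variables (R : realFieldType) (n : nat).

Lemma sum_xk (u : 'I_n -> R) k : \sum_i xk u k i = Usum u k.
Proof. by rewrite /Usum [RHS]big_mkcond; apply: eq_bigr. Qed.

Lemma sum_e (j : 'I_n) (a : R) : \sum_i a * evec R j i = a.
Proof.
rewrite (bigD1 j) //= big1 ?addr0 /evec ?eqxx ?mulr1 // => i /negbTE ->.
by rewrite mulr0.
Qed.

Lemma sum_ce (c : 'I_n -> R) (j : 'I_n) (a : R) :
  \sum_i c i * (a * evec R j i) = c j * a.
Proof.
rewrite (bigD1 j) //= big1 ?addr0 /evec ?eqxx ?mulr1 // => i /negbTE ->.
by rewrite !mulr0.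
Qed.

Lemma fobj_dec (c u x : 'I_n -> R) (k : nat) (p q : 'I_n) (a b : R) :
  (forall i, x i = xk u k i + a * evec R p i + b * evec R q i) ->
  fobj c x = (Usum u k + a + b)^+2/2%:R
             - (\sum_i c i * xk u k i + (c p * a + c q * b)).
Proof.
move=> H; rewrite /fobj.
under eq_bigr do rewrite H.
under [X in _ - X]eq_bigr do rewrite H !mulrDr.
by rewrite !big_split /= sum_xk !sum_e !sum_ce addrA.
Qed.

Lemma xk_succ (u : 'I_n -> R) (j : 'I_n) i :
  xk u j.+1 i = xk u j i + u j * evec R j i.
Proof.
rewrite /xk /evec; case: (eqVneq i j) => [->|nij].
  by rewrite ltnSn ltnn mulr1 add0r.
have nij' : (nat_of_ord i != nat_of_ord j) by apply: contra nij => /eqP h; apply/eqP; apply: val_inj.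
rewrite mulr0 addr0 ltnS leq_eqVlt.
by rewrite (negbTE nij').
Qed.

Lemma feas_dec (u x : 'I_n -> R) (p q : 'I_n) :
  (q : nat) = p.+1 -> vle (xk u p) x -> vle x (xk u q.+1) ->
  forall i, x i = xk u p i + x p * evec R p i + x q * evec R q i.
Proof.
move=> hq lo hi i; have := lo i; have := hi i.
rewrite /xk /evec.
case: (eqVneq i p) => [->|nip].
  have npq : p != q by apply/eqP => h; move: hq; rewrite h; lia.
  by rewrite (negbTE npq) mulr1 mulr0 addr0 ltnn add0r.
case: (eqVneq i q) => [->|niq].
  have npq : q != p by apply/eqP => h; move: hq; rewrite h; lia.
  have -> : (q < p)%N = false by lia.
  by rewrite mulr0 mulr1 addr0 add0r.
have nip' : (nat_of_ord i != nat_of_ord p) by apply: contra nip => /eqP h; apply/eqP; apply: val_inj.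
have niq' : (nat_of_ord i != nat_of_ord q) by apply: contra niq => /eqP h; apply/eqP; apply: val_inj.
rewrite !mulr0 !addr0.
case: ifP => h1; case: ifP => h2; try lia; rewrite ?addr0 => a b; apply/eqP; by rewrite eq_le a b.
Qed.

Lemma feas_ok (u y : 'I_n -> R) (p q : 'I_n) (a b : R) :
  (q : nat) = p.+1 -> 0 <= a -> a <= u p -> 0 <= b -> b <= u q ->
  (forall i, y i = xk u p i + a * evec R p i + b * evec R q i) ->
  (forall i, 0 < u i) -> vle (xk u p) y /\ vle y (xk u q.+1).
Proof.
move=> hq a0 au b0 bu hy hu.
have npq : p != q by apply/eqP => h; move: hq; rewrite -h; lia.
split=> i; rewrite hy /xk /evec; have := ltW (hu i).
all: case: (eqVneq i p) => [->|nip]; [rewrite (negbTE npq) | case: (eqVneq i q) => [->|niq]].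
all: try (have nip' : (nat_of_ord i != nat_of_ord p) by apply: contra nip => /eqP h; apply/eqP; apply: val_inj).
all: try (have niq' : (nat_of_ord i != nat_of_ord q) by apply: contra niq => /eqP h; apply/eqP; apply: val_inj).
all: repeat case: ifP => ?; try lia; try lra.
Qed.

End Aux.
Arguments fobj_dec {R n c u x k p q a b}.
Arguments feas_dec {R n u x p q}.
Arguments xk_succ {R n}.
Arguments feas_ok {R n u y p q a b}.

(* nb : 'I_n is the 0-based index of \bar n, i.e. \bar n = nb + 1. *)
Theorem theorem2 (R : realFieldType) (n : nat) (hn : (1 <= n)%N)
  (c u : 'I_n -> R)
  (hc_mono : forall i j : 'I_n, (i <= j)%N -> c j <= c i)
  (hc_nonneg : forall i : 'I_n, 0 <= c i)
  (hu : forall i : 'I_n, 0 < u i)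
  (nb : 'I_n)
  (hG_nb : 0 <= Gval c u nb)
  (hG_min : forall j : 'I_n, (j < nb)%N -> Gval c u j < 0) :
  ((0 < nb)%N ->
     let p := prevo nb in
     let d1 := Num.min (c p - Usum u nb.-1) (u p) in
     let d2 := Num.max (c nb - Usum u nb) 0 in
     let xbar := fun i => xk u nb.-1 i + d1 * evec R p i in
     let xtil := fun i => xk u nb i + d2 * evec R nb i in
     optimal_value (fobj c)
       (fun x => vle (xk u nb.-1) x /\ vle x (xk u nb.+1))
       (Num.min (fobj c xbar) (fobj c xtil))) /\
  (nb = 0%N :> nat ->
     let d := Num.min (c nb) (u nb) in
     let xtil := fun i => d * evec R nb i in
     optimal_value (fobj c)
       (fun x => vle (xk u 0) x /\ vle x (xk u 1))
       (fobj c xtil)).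
Proof.
split.
- move=> hnb p d1 d2 xbar xtil.
  have hp : (p : nat) = nb.-1 by [].
  have hq : (nb : nat) = p.+1 by rewrite hp prednK.
  have hpn : p != nb by apply/eqP => h; move: hq; rewrite -h; lia.
  have ebar : forall i, xbar i = xk u p i + d1 * evec R p i + 0 * evec R nb i.
    by move=> i; rewrite mul0r addr0.
  have etil : forall i, xtil i = xk u p i + u p * evec R p i + d2 * evec R nb i.
    by move=> i; rewrite /xtil hq xk_succ.
  have hU : Usum u nb = Usum u p + u p.
    rewrite -!sum_xk hq.
    under eq_bigr do rewrite xk_succ.
    by rewrite big_split /= sum_e.
  have Hmin : forall x, vle (xk u nb.-1) x /\ vle x (xk u nb.+1) ->
      Num.min (fobj c xbar) (fobj c xtil) <= fobj c x.
    move=> x [lo hi].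
    have dx := feas_dec hq lo hi.
    rewrite (fobj_dec ebar) (fobj_dec etil) (fobj_dec dx).
    move: (lo p) (hi p) (lo nb) (hi nb); rewrite /xk.
    do 4 (case: ifP => ?); try lia; move=> a0 au b0 bu.
    apply: (@alg1 R _ _ (Usum u nb) _ _ (u p) (u nb)) => //.
    + by apply: hc_mono; rewrite hq.
    + by apply: hG_min; rewrite hq.
  split => //.
  move=> e he.
  case: (leP (fobj c xbar) (fobj c xtil)) => hle.
  + exists xbar; split; last lra.
    have hd1 : 0 <= d1 /\ d1 <= u p.
      have := hG_min p; rewrite /Gval hq ltnSn => /(_ isT) G.
      have := hu p; rewrite /d1.
      case: (leP (c p - Usum u nb.-1) (u p)) => h; split; lra.
    case: hd1 => ? ?; move: (hu nb) (hu p) => ? ?; apply: (feas_ok hq _ _ _ _ ebar hu); lra.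
  + exists xtil; split; last lra.
    have hd2 : 0 <= d2 /\ d2 <= u nb.
      have := hG_nb; rewrite /Gval hU => G.
      have := hu nb; rewrite /d2 hU.
      case: (leP (c nb - (Usum u p + u p)) 0) => h; split; lra.
    case: hd2 => ? ?; move: (hu nb) (hu p) => ? ?; apply: (feas_ok hq _ _ _ _ etil hu); lra.
- move=> hnb d xtil.
  have e0 : forall i, xtil i = xk u 0 i + d * evec R nb i + 0 * evec R nb i.
    by move=> i; rewrite /xk ltn0 add0r mul0r addr0.
  have hd : 0 <= d /\ d <= u nb.
    have := hc_nonneg nb; have := hu nb; rewrite /d.
    case: (leP (c nb) (u nb)) => h; split; lra.
  have U0 : Usum u 0 = 0 by rewrite /Usum big_pred0.
  split.
  + move=> x [lo hi].
    have dx : forall i, x i = xk u 0 i + x nb * evec R nb i + 0 * evec R nb i.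
      move=> i; have := lo i; have := hi i; rewrite /xk /evec ltn0 mul0r addr0 add0r.
      case: (eqVneq i nb) => [->|nin]; first by rewrite mulr1.
      have nin' : (nat_of_ord i != nat_of_ord nb) by apply: contra nin => /eqP h; apply/eqP; apply: val_inj.
      rewrite mulr0; case: ifP => h1; first lia.
      move=> *; apply/eqP; rewrite eq_le; apply/andP; split => //.
    rewrite (fobj_dec e0) (fobj_dec dx) U0.
    have := lo nb; have := hi nb; rewrite /xk hnb ltn0 /= => au a0.
    apply: (@alg2 R _ _ (u nb)) => //.
    by move: hG_nb; rewrite /Gval hnb U0 => h; exact: h.
  + move=> e he; exists xtil; split; last lra.
    case: hd => d0 du.
    split => i; rewrite /xtil /xk /evec ?ltn0; have := ltW (hu i);
      case: (eqVneq i nb) => [hi|nin]; rewrite ?mulr1 ?mulr0 //.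
    + by subst i; rewrite hnb.
    + have nin' : (nat_of_ord i != nat_of_ord nb) by apply: contra nin => /eqP h; apply/eqP; apply: val_inj.
      case: ifP => h1 //; lia.
Qed.
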